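(* Let $N$ be a lattice of finite rank with basis $\{e_i\}_{i\in I}$, $F\subset I$, $\omega$ a $\mathbb{Q}$-valued skew-symmetric form on $N$ with $\omega(e_i,e_j)\in\mathbb{Z}$ whenever $i\notin F$ or $j\notin F$, $M=\mathrm{Hom}(N,\mathbb{Z})$, $\omega_1:N\to M_{\mathbb{Q}}$, $n\mapsto\omega(n,\cdot)$, and let $\Lambda$ be a $\mathbb{Q}$-valued skew-symmetric form on $M$ such that $\Lambda(\cdot,\omega_1(e_i))=d\,e_i$ (as elements of $N_{\mathbb{Q}}$) for all $i\in I\setminus F$, for a fixed $d\in\mathbb{Q}_{>0}$. Let $M^+$ be the set of nonzero elements of the $\mathbb{Z}_{\geq0}$-span of $\{\omega_1(e_i): i\in I\setminus F\}$, and for $m\in M^+$ let $|m|$ be the largest positive integer $k$ with $\frac1k m\in M^+$. Let $\Bbbk$ be a commutative ring containing $\mathbb{Z}$ and $\Bbbk_t=\Bbbk[t^{\pm1/D}]$ with $D$ a positive integer such that $\Lambda$ and $\omega$ are $\frac1D\mathbb{Z}$-valued. Then for any $a,b\in M^+$, $$\frac{(t^{d|a+b|}-t^{-d|a+b|})(t^{\Lambda(a,b)}-t^{-\Lambda(a,b)})}{(t^{d|a|}-t^{-d|a|})(t^{d|b|}-t^{-d|b|})}\in\Bbbk_t.$$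
   Context: All notation is introduced in the statement; the fraction is a priori an element of the fraction field of $\Bbbk_t$. *)

(* Defs.v *)
From mathcomp Require Import all_boot all_order all_algebra.
Set Implicit Arguments. Unset Strict Implicit. Unset Printing Implicit Defensive.
Import Order.TTheory GRing.Theory Num.Theory.
Local Open Scope ring_scope.

(* ---------- Laurent polynomials  k[s^{+-1}]  (s = t^{1/D}) ----------------
   An element is represented as  p * s^{-n}  with p : {poly R}, n : nat,
   i.e. k[s^{+-1}] is presented as the localisation of k[s] at s.          *)
Record laurent (R : comNzRingType) := Laurent { lpoly : {poly R}; lshift : nat }.

Section Laurent.
Variable R : comNzRingType.
Definition leqv (x y : laurent R) : Prop :=
  lpoly x * 'X^(lshift y) = lpoly y * 'X^(lshift x).
Definition ladd (x y : laurent R) : laurent R :=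
  Laurent (lpoly x * 'X^(lshift y) + lpoly y * 'X^(lshift x)) (lshift x + lshift y).
Definition lopp (x : laurent R) : laurent R := Laurent (- lpoly x) (lshift x).
Definition lsub (x y : laurent R) : laurent R := ladd x (lopp y).
Definition lmul (x y : laurent R) : laurent R :=
  Laurent (lpoly x * lpoly y) (lshift x + lshift y).
Definition spow (z : int) : laurent R :=
  match z with
  | Posz n => Laurent 'X^n 0
  | Negz n => Laurent 1 n.+1
  end.
(* t^x for x in (1/D)Z :  t^x = s^{D x} *)
Definition tpow (D : nat) (x : rat) : laurent R := spow (numq (x * D%:R)).
Definition tsh (D : nat) (x : rat) : laurent R := lsub (tpow D x) (tpow D (- x)).
(* y/x lies in k_t : x divides y in k[s^{+-1}] *)
Definition ldivides (x y : laurent R) : Prop := exists q, leqv (lmul x q) y.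
End Laurent.

(* ---------- lattice data ----------------------------------------------------
   N = Z^I with basis (e_i); a skew form omega on N is given by its Gram
   matrix omega i j = omega(e_i,e_j).  M = Hom(N,Z) = Z^I in the dual basis
   (e_i^* ); elements of M_Q are functions I -> rat (coordinates in the dual
   basis), and Lam i j = Lam(e_i^* , e_j^* ).                                  *)
Section Lattice.
Variable I : finType.

Definition omega1 (omega : I -> I -> rat) (i : I) : {ffun I -> rat} :=
  [ffun j => omega i j].

Definition formM (Lam : I -> I -> rat) (m m' : {ffun I -> rat}) : rat :=
  \sum_i \sum_j m i * m' j * Lam i j.

Definition inMplus (omega : I -> I -> rat) (F : {set I}) (m : {ffun I -> rat})
  : Prop :=
  m != [ffun => 0] /\
  exists c : I -> nat, (forall i, i \in F -> c i = 0%N) /\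
    m = [ffun j => \sum_i (c i)%:R * omega1 omega i j].

Definition absM (omega : I -> I -> rat) (F : {set I}) (m : {ffun I -> rat})
  (k : nat) : Prop :=
  (0 < k)%N /\ inMplus omega F [ffun j => (k%:R)^-1 * m j] /\
  forall k' : nat, (0 < k')%N -> inMplus omega F [ffun j => (k'%:R)^-1 * m j] -> (k' <= k)%N.
End Lattice.

(* Main.v *)
Require Import Defs.
From mathcomp Require Import all_boot all_order all_algebra.
From mathcomp Require Import ring zify.
Import Order.TTheory GRing.Theory Num.Theory.
Local Open Scope ring_scope.

Section LaurentAux.
Variable R : comNzRingType.

Lemma ldiv_of (x y : laurent R) h j :
  lpoly x * h = lpoly y * 'X^j -> ldivides x y.
Proof.
move=> E; exists (@Laurent R (h * 'X^(Defs.lshift x)) (j + Defs.lshift y)); rewrite /leqv /=.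
rewrite !exprD mulrA E; ring.
Qed.

Lemma tsh_spow D x : tsh R D x =
  lsub (spow R (numq (x * D%:R))) (spow R (- numq (x * D%:R))).
Proof. by rewrite /tsh /tpow mulNr numqN. Qed.

Definition PP n : {poly R} := 'X^(2 * n) - 1.

Lemma lpoly_tsh_nat (n : nat) :
  lpoly (lsub (spow R (Posz n)) (spow R (- Posz n))) = PP n.
Proof.
case: n => [|n] /=; rewrite /PP /=.
  by rewrite expr0 !mulr1 subrr.
by rewrite mul2n -addnn exprD expr0; ring.
Qed.

Lemma lpoly_tsh_int (z : int) : exists c,
  lpoly (lsub (spow R z) (spow R (- z))) = c * PP `|z|%N.
Proof.
case: z => n; first by exists 1; rewrite mul1r lpoly_tsh_nat.
exists (-1); rewrite /= /PP mul2n -addnn exprD expr0; ring.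
Qed.

Lemma PPdvd n t : exists G, PP (n * t) = PP n * G.
Proof.
by exists (\sum_(i < t) ('X^(2 * n)) ^+ i); rewrite /PP mulnA exprM subrX1.
Qed.

Lemma PPdvd' {n m} : (n %| m)%N -> exists G, PP m = PP n * G.
Proof. by move=> /dvdnP [t ->]; rewrite mulnC; apply: PPdvd. Qed.

Lemma PPmain A B N V : (0 < A)%N -> (gcdn A B %| N)%N -> (A %| V)%N -> (B %| V)%N ->
  exists H j, PP A * PP B * H = PP N * PP V * 'X^j.
Proof.
move=> A0 gN AV BV.
have [p _ hp] := Bezoutr B A0.
case/dvdnP: gN => r hr.
case/dvdnP: hp => s hs.
have key : (s * r * A = p * r * B + N)%N.
  rewrite hr gcdnC -mulnA [(r * A)%N]mulnC mulnA -hs; ring.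
have [G1 h1] := PPdvd' (dvdn_mull (s * r) (dvdnn A)).
have [G2 h2] := PPdvd' BV.
have [G3 h3] := PPdvd' (dvdn_mull (p * r) (dvdnn B)).
have [G4 h4] := PPdvd' AV.
exists (G1 * G2 - G3 * G4), (2 * (p * r * B))%N.
have e : PP N * 'X^(2 * (p * r * B)) = PP (s * r * A) - PP (p * r * B).
  rewrite key /PP mulnDr exprD; ring.
have e2 : PP A * PP B * (G1 * G2 - G3 * G4) = PP N * 'X^(2 * (p * r * B)) * PP V.
  rewrite e h1 h3.
  have -> : (PP A * G1 - PP B * G3) * PP V = PP A * G1 * PP V - PP B * G3 * PP V by ring.
  rewrite {1}h2 h4; ring.
rewrite e2; ring.
Qed.

End LaurentAux.

Set Implicit Arguments. Unset Strict Implicit.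
Section Lat.
Variable I : finType.
Implicit Types (Lam omega : I -> I -> rat) (m : {ffun I -> rat}).

Definition comb omega (c : I -> nat) : {ffun I -> rat} :=
  [ffun j => \sum_i (c i)%:R * omega1 omega i j].

Lemma formM_sumr Lam m (x : I -> rat) (f : I -> {ffun I -> rat}) :
  formM Lam m [ffun j => \sum_i x i * f i j] = \sum_i x i * formM Lam m (f i).
Proof.
rewrite /formM; symmetry.
under eq_bigr do rewrite mulr_sumr.
rewrite exchange_big /=; apply: eq_bigr => i1 _.
under eq_bigr do rewrite mulr_sumr.
rewrite exchange_big /=; apply: eq_bigr => j _.
rewrite ffunE mulr_sumr mulr_suml; apply: eq_bigr => i _; ring.
Qed.

Lemma pairE Lam j m :
  formM Lam [ffun l => (l == j)%:R] m = \sum_l m l * Lam j l.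
Proof.
rewrite /formM (bigD1 j) //= [X in _ + X]big1 ?addr0.
  by apply: eq_bigr => l _; rewrite ffunE eqxx mul1r.
move=> i /negPf ne; apply: big1 => l _; rewrite ffunE ne mul0r mul0r //.
Qed.

Lemma formM_l Lam m m' :
  formM Lam m m' = \sum_j m j * formM Lam [ffun l => (l == j)%:R] m'.
Proof.
apply: eq_bigr => j _; rewrite pairE mulr_sumr; apply: eq_bigr => l _; ring.
Qed.

Lemma comb_pair omega Lam (F : {set I}) d
  (compat : forall i : I, i \notin F -> forall j,
      formM Lam [ffun l => (l == j)%:R] (omega1 omega i) = d * (i == j)%:R)
  (c : I -> nat) (cF : forall i, i \in F -> c i = 0%N) j :
  formM Lam [ffun l => (l == j)%:R] (comb omega c) = d * (c j)%:R.
Proof.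
rewrite formM_sumr (bigD1 j) //= big1 ?addr0.
  case: (boolP (j \in F)) => jF; first by rewrite cF // !mul0r mulr0.
  by rewrite compat // eqxx mulr1 mulrC.
move=> i ne; case: (boolP (i \in F)) => iF; first by rewrite cF // mul0r.
by rewrite compat // (negPf ne) mulr0 mulr0.
Qed.

Lemma comb_uniq omega Lam (F : {set I}) d (d0 : d != 0)
  (compat : forall i : I, i \notin F -> forall j,
      formM Lam [ffun l => (l == j)%:R] (omega1 omega i) = d * (i == j)%:R)
  (c1 c2 : I -> nat) (c1F : forall i, i \in F -> c1 i = 0%N)
  (c2F : forall i, i \in F -> c2 i = 0%N) :
  comb omega c1 = comb omega c2 -> forall i, c1 i = c2 i.
Proof.
move=> E i.
have := comb_pair compat c1F i; rewrite E (comb_pair compat c2F) => /(mulfI d0) /eqP.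
by rewrite eqr_nat => /eqP.
Qed.

Lemma comb_scale omega (k : nat) m c : (0 < k)%N ->
  [ffun j => (k%:R)^-1 * m j] = comb omega c -> m = comb omega (fun i => k * c i)%N.
Proof.
move=> k0 E; apply/ffunP => j; move/ffunP/(_ j): E; rewrite !ffunE => Ej.
have k0' : (k%:R : rat) != 0 by rewrite pnatr_eq0 -lt0n.
transitivity (k%:R * ((k%:R)^-1 * m j)); first by rewrite mulrA divff ?mul1r.
rewrite Ej mulr_sumr; apply: eq_bigr => i _; rewrite natrM mulrA //.
Qed.

Lemma combD omega c1 c2 :
  comb omega (fun i => c1 i + c2 i)%N = [ffun j => comb omega c1 j + comb omega c2 j].
Proof.
apply/ffunP => j; rewrite /comb !ffunE -big_split /=; apply: eq_bigr => i _.
by rewrite natrD mulrDl.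
Qed.

End Lat.
Unset Implicit Arguments.

Set Implicit Arguments. Unset Strict Implicit.
Lemma formM_v (I : finType) (omega Lam : I -> I -> rat) (F : {set I}) d
  (compat : forall i : I, i \notin F -> forall j,
      formM Lam [ffun l => (l == j)%:R] (omega1 omega i) = d * (i == j)%:R)
  m i : i \notin F -> formM Lam m (omega1 omega i) = m i * d.
Proof.
move=> iF; rewrite formM_l (bigD1 i) //= compat // eqxx mulr1 big1 ?addr0 //.
by move=> j ne; rewrite compat // eq_sym (negPf ne) !mulr0.
Qed.

Lemma numq_nat (n : nat) : numq (n%:R : rat) = n%:Z.
Proof. by rewrite pmulrn numq_int. Qed.

Lemma lpoly_lmul (R : comNzRingType) (x y : laurent R) :
  lpoly (lmul x y) = lpoly x * lpoly y.
Proof. by []. Qed.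
Unset Implicit Arguments.

Theorem lemma5p1
  (I : finType) (F : {set I})
  (omega : I -> I -> rat)
  (omega_skew : forall i j, omega i j = - omega j i)
  (omega_int : forall i j, (i \notin F) || (j \notin F) -> omega i j \is a Num.int)
  (Lam : I -> I -> rat)
  (Lam_skew : forall i j, Lam i j = - Lam j i)
  (d : rat) (d_pos : 0 < d)
  (compat : forall i, i \notin F -> forall j,
      formM Lam [ffun l => (l == j)%:R] (omega1 omega i) = d * (i == j)%:R)
  (k : comNzRingType)
  (k_char0 : injective (fun z : int => z%:~R : k))
  (D : nat) (D_pos : (0 < D)%N)
  (Lam_D : forall i j, Lam i j * D%:R \is a Num.int)
  (omega_D : forall i j, omega i j * D%:R \is a Num.int)
  (a b : {ffun I -> rat})
  (a_pos : inMplus omega F a) (b_pos : inMplus omega F b)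
  (na nb nab : nat)
  (abs_a : absM omega F a na) (abs_b : absM omega F b nb)
  (abs_ab : absM omega F [ffun j => a j + b j] nab) :
  ldivides
    (lmul (tsh k D (d * na%:R)) (tsh k D (d * nb%:R)))
    (lmul (tsh k D (d * nab%:R)) (tsh k D (formM Lam a b))).

Proof.
have d0 : d != 0 by rewrite gt_eqF.
case: abs_a => na0 [[anz [ca [caF Ea]]] _].
case: abs_b => nb0 [[bnz [cb [cbF Eb]]] _].
case: abs_ab => nab0 [[abnz [cab [cabF Eab]]] abmax].
have Ea' := comb_scale na0 Ea.
have Eb' := comb_scale nb0 Eb.
have Eab' := comb_scale nab0 Eab.
(* gcd divides |a+b| *)
pose Ca i := (na * ca i + nb * cb i)%N.
have CaF : forall i, i \in F -> Ca i = 0%N by move=> i iF; rewrite /Ca caF ?cbF ?muln0.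
have cabF' : forall i, i \in F -> (nab * cab i = 0)%N by move=> i iF; rewrite cabF ?muln0.
have ECa : comb omega Ca = [ffun j => a j + b j].
  by rewrite /Ca combD -Ea' -Eb'.
have hC : forall i, Ca i = (nab * cab i)%N.
  by apply: (comb_uniq d0 compat CaF cabF'); rewrite ECa.
pose g := gcdn na nb.
pose L := lcmn g nab.
have LC : forall i, (L %| Ca i)%N.
  move=> i; rewrite dvdn_lcm; apply/andP; split; last by rewrite hC dvdn_mulr.
  by rewrite dvdn_add // dvdn_mulr // ?dvdn_gcdl ?dvdn_gcdr.
have L0 : (0 < L)%N by rewrite lcmn_gt0 gcdn_gt0 na0 nab0.
have L0' : (L%:R : rat) != 0 by rewrite pnatr_eq0 -lt0n.
have inL : inMplus omega F [ffun j => (L%:R)^-1 * [ffun j0 => a j0 + b j0] j].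
  split.
    apply/negP => /eqP /ffunP H0; apply: (negP abnz); apply/eqP/ffunP => j.
    have := H0 j; rewrite !ffunE => /eqP; rewrite mulf_eq0 invr_eq0 (negPf L0') /=.
    by move/eqP ->; rewrite mulr0.
  exists (fun i => Ca i %/ L)%N; split; first by move=> i iF; rewrite CaF // div0n.
  apply/ffunP => j; rewrite !ffunE.
  have -> : a j + b j = comb omega Ca j by rewrite ECa ffunE.
  rewrite /comb ffunE mulr_sumr; apply: eq_bigr => i _.
  rewrite -{1}(divnK (LC i)) natrM; field; done.
have LN : L = nab.
  by apply/eqP; rewrite eqn_leq (abmax L L0 inL) dvdn_leq // dvdn_lcmr.
have gN : (g %| nab)%N by rewrite -LN dvdn_lcml.
pose m := \sum_i \sum_j (cb i)%:R * (ca j)%:R * omega j i.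
have HL : formM Lam a b = d * (na * nb)%:R * m.
  have -> : formM Lam a b = formM Lam a (comb omega (fun i => nb * cb i)%N) by rewrite -Eb'.
  rewrite /comb formM_sumr /m !mulr_sumr; apply: eq_bigr => i _.
  case: (boolP (i \in F)) => iF.
    by rewrite cbF // muln0 mul0r big1 ?mulr0 // => j _; rewrite !mul0r.
  rewrite (formM_v compat) // Ea' ffunE mulr_sumr mulr_suml mulr_sumr.
  apply: eq_bigr => j _; rewrite ffunE !natrM; ring.
have mint : m \is a Num.int.
  apply: rpred_sum => i _; apply: rpred_sum => j _.
  case: (boolP (i \in F)) => iF; first by rewrite cbF // !mul0r rpred0.
  by apply: rpredM; [apply: rpredM; apply: rpred_nat | apply: omega_int; rewrite iF orbT].
case/intrP: mint => mi Em.
have [i0 Hi0] : exists i, ca i != 0%N.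
  case: (pickP (fun i => ca i != 0%N)) => [i0 Hi0 | H0]; first by exists i0.
  exfalso; apply: (negP anz); rewrite Ea; apply/eqP/ffunP => j; rewrite !ffunE big1 // => i _.
  by move: (H0 i) => /= /negbFE /eqP ->; rewrite mul0r.
have nF : i0 \notin F by apply/negP => iF; rewrite caF in Hi0.
have dDint : d * D%:R \is a Num.int.
  have := compat i0 nF i0; rewrite eqxx mulr1 pairE => <-.
  rewrite mulr_suml; apply: rpred_sum => l _; rewrite ffunE -mulrA.
  by apply: rpredM; [apply: omega_int; rewrite nF | apply: Lam_D].
have [E E0 hE] : exists2 E : nat, (0 < E)%N & d * D%:R = E%:R.
  case/intrP: dDint => z Ez.
  have zp : 0 < z by rewrite -(ltr0z rat) -Ez mulr_gt0 // ltr0n.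
  exists `|z|%N; first by rewrite absz_gt0 gt_eqF.
  by rewrite Ez pmulrn gtz0_abs.
have zA : forall n : nat, numq (d * n%:R * D%:R) = Posz (E * n)%N.
  by move=> n; rewrite mulrAC hE -natrM numq_nat.
have zW : numq (formM Lam a b * D%:R) = (Posz (E * na * nb)%N * mi)%R.
  have -> : formM Lam a b * D%:R = (Posz (E * na * nb)%N * mi)%:~R.
    rewrite HL Em intrM -pmulrn.
    transitivity ((d * D%:R) * (na * nb)%:R * mi%:~R); first ring.
    by rewrite hE -natrM mulnA.
  by rewrite numq_int.
rewrite !tsh_spow !zA zW.
have [cW hW] := lpoly_tsh_int k (Posz (E * na * nb)%N * mi).
rewrite abszM in hW; change (`|Posz (E * na * nb)%N|%N) with (E * na * nb)%N in hW.
have [H [j hH]] := @PPmain k (E * na)%N (E * nb)%N (E * nab)%N (E * na * nb * `|mi|)%N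
  ltac:(by rewrite muln_gt0 E0 na0) ltac:(by rewrite -muln_gcdr dvdn_mul) ltac:(by rewrite -!mulnA dvdn_mul // dvdn_mulr)
  ltac:(by apply/dvdnP; exists (na * `|mi|)%N; ring).
apply: (@ldiv_of k _ _ (H * cW) j).
rewrite !lpoly_lmul !lpoly_tsh_nat hW mulrA hH; ring.
Qed.
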